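(* Let $k\ge 1$ and $p\ge k+1$ be integers and let $G$ be a graph with a $k$-degenerate ordering $(v_1,\dots,v_n)$ of $V(G)$. If there exists $\ell\in[n]$ such that $\{v_1,\dots,v_\ell\}$ is a vertex cover of $G$, then $\mathrm{id}^{\leq p}(G)\le \ell$. In particular, every $k$-degenerate graph $G$ satisfies $\mathrm{id}^{\leq p}(G)\le |V(G)|-1$ for every $p\ge k+1$.
   Context: A $k$-degenerate ordering of $G$ is an ordering $(v_1,\dots,v_n)$ of $V(G)$ such that each $v_i$ has at most $k$ neighbours in $\{v_{i+1},\dots,v_n\}$; $G$ is $k$-degenerate if it has such an ordering. For an oriented graph $D$ and $X\subseteq V(D)$, the inversion of $X$ reverses every arc with both endvertices in $X$; a $(\leq p)$-inversion is the inversion of a set of at most $p$ vertices. $\mathrm{id}^{\leq p}(G)$ is the maximum, over all ordered pairs $(\vec G_1,\vec G_2)$ of orientations of $G$, of the minimum number of $(\leq p)$-inversions transforming $\vec G_1$ into $\vec G_2$. *)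

(* Defs.v *)
From mathcomp Require Import all_boot.
Set Implicit Arguments. Unset Strict Implicit. Unset Printing Implicit Defensive.

Definition simple_graph (T : finType) (e : rel T) : Prop :=
  symmetric e /\ irreflexive e.

(* An orientation of G: a relation o (o x y = "arc x -> y") such that arcs are
   edges of G and each edge receives exactly one direction. *)
Definition orientation (T : finType) (e : rel T) (o : rel T) : Prop :=
  (forall x y, o x y -> e x y) /\ (forall x y, e x y -> o x y (+) o y x).

Definition invert (T : finType) (X : {set T}) (o : rel T) : rel T :=
  fun x y => if (x \in X) && (y \in X) then o y x else o x y.

Definition invert_seq (T : finType) (Xs : seq {set T}) (o : rel T) : rel T :=
  foldl (fun o' X => invert X o') o Xs.

(* id^{<=p}(G) <= m : for every ordered pair (D1, D2) of orientations of G,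
   D1 can be transformed into D2 by at most m (<= p)-inversions. *)
Definition inv_diam_le (T : finType) (e : rel T) (p m : nat) : Prop :=
  forall D1 D2 : rel T, orientation e D1 -> orientation e D2 ->
    exists Xs : seq {set T},
      [/\ size Xs <= m, all (fun X : {set T} => #|X| <= p) Xs &
          forall x y, invert_seq Xs D1 x y = D2 x y].

(* An ordering (v_1, ..., v_n) of V(G): a duplicate-free list of all vertices.
   (v_{i+1} is nth _ s i, 0-based.) *)
Definition vertex_ordering (T : finType) (s : seq T) : Prop :=
  uniq s /\ forall x, x \in s.

Definition degenerate_ordering (T : finType) (e : rel T) (k : nat) (s : seq T) : Prop :=
  vertex_ordering s /\
  forall x, x \in s -> #|[set y | e x y & index x s < index y s]| <= k.

Definition k_degenerate (T : finType) (e : rel T) (k : nat) : Prop :=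
  exists s, degenerate_ordering e k s.

Definition vertex_cover (T : finType) (e : rel T) (C : pred T) : Prop :=
  forall x y, e x y -> C x || C y.

(* Main.v *)
Require Import Defs.
From mathcomp Require Import all_boot.

Section Proof.
Variables (T : finType) (e : rel T).

Lemma orient_flip {o x y} : orientation e o -> e x y -> o y x = ~~ o x y.
Proof. by case=> _ H /H; case: (o x y); case: (o y x). Qed.

Lemma invert_orient X o : symmetric e -> orientation e o -> orientation e (invert X o).
Proof.
move=> sym [H1 H2]; split=> x y; rewrite /invert.
  by case: ifP => _ /H1 //; rewrite sym.
move=> Exy; rewrite [(y \in X) && _]andbC.
case: ifP => _; last exact: H2 Exy.
apply: H2; by rewrite sym.
Qed.

Lemma build k p s l D2 :
  simple_graph e -> k.+1 <= p -> degenerate_ordering e k s -> l <= size s ->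
  orientation e D2 ->
  (forall x y, e x y -> index x s < index y s -> index x s < l) ->
  forall n i D, i + n = l -> orientation e D ->
  (forall x y, e x y -> index x s < index y s -> index x s < i -> D x y = D2 x y) ->
  exists Xs : seq {set T},
      [/\ size Xs <= n, all (fun X : {set T} => #|X| <= p) Xs &
          forall x y, invert_seq Xs D x y = D2 x y].
Proof.
move=> [sym irr] kp [[us alls] deg] ls O2 cov.
have rinj : forall x y, index x s = index y s -> x = y.
  move=> x y Hxy; rewrite -(nth_index x (alls x)) Hxy.
  exact: nth_index.
elim=> [|n IH] i D Hin OD Inv.
  exists [::]; split=> // x y /=.
  case Exy: (e x y); last first.
    case E1: (D x y); first by move: (OD.1 _ _ E1); rewrite Exy.
    case E2: (D2 x y) => //; by move: (O2.1 _ _ E2); rewrite Exy.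
  have nxy : index x s != index y s.
    apply/negP=> /eqP /rinj Hxy; subst y; by rewrite irr in Exy.
  rewrite addn0 in Hin; subst i.
  case: (ltngtP (index x s) (index y s)) nxy => // H _.
    exact: Inv x y Exy H (cov _ _ Exy H).
  have Eyx : e y x by rewrite sym.
  rewrite (orient_flip OD Eyx) (orient_flip O2 Eyx).
  by rewrite (Inv y x Eyx H (cov _ _ Eyx H)).
have il : i < size s by apply: leq_trans ls; rewrite -Hin addnS ltnS leq_addr.
have [x0 _] : exists x0 : T, true.
  by move: il; case E: s => [|a ?] // _; exists a.
set v := nth x0 s i.
have rv : index v s = i by apply: index_uniq.
set X := v |: [set u | e v u & (i < index u s) && (D v u != D2 v u)].
have cX : #|X| <= p.
  apply: (leq_trans _ kp); rewrite cardsU1.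
  rewrite -(add1n k); apply: leq_add; first by case: (v \notin _).
  apply: leq_trans (deg v (alls v)); apply: subset_leq_card.
  apply/subsetP=> u; rewrite !inE rv => /andP[-> /andP[-> _]] //.
have Hin' : i.+1 + n = l by rewrite addSnnS.
have [|Xs [H1 H2 H3]] := IH i.+1 (invert X D) Hin' (@invert_orient X D sym OD); last first.
  by exists (X :: Xs); split=> //=; rewrite H2 cX.
move=> x y Exy rxy; rewrite ltnS leq_eqVlt => /orP [/eqP rx | rx].
  have xv : x = v by apply: rinj; rewrite rx rv.
  subst x; rewrite /invert.
  have yv : y != v by apply/eqP=> yv; subst y; rewrite ltnn in rxy.
  have vX : v \in X by rewrite /X !inE eqxx.
  have yX : (y \in X) = (D v y != D2 v y).
    by rewrite /X !inE (negbTE yv) /= Exy -rv rxy.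
  rewrite vX yX /=.
  case: ifP => [bad|/negbT/negPn/eqP //].
  rewrite (orient_flip OD Exy).
  by case: (D v y) bad; case: (D2 v y).
rewrite /invert.
have xX : x \in X = false.
  rewrite /X !inE; apply/negbTE; apply/negP=> /orP[/eqP xv|/andP[_ /andP[H _]]].
    by subst x; rewrite rv ltnn in rx.
  by move: (ltn_trans rx H); rewrite ltnn.
by rewrite xX /=; apply: Inv.
Qed.

Lemma general k p s l :
  simple_graph e -> k.+1 <= p -> degenerate_ordering e k s -> l <= size s ->
  vertex_cover e (fun x => x \in take l s) -> inv_diam_le e p l.
Proof.
move=> sg kp dg ls vc D1 D2 O1 O2.
have [[us alls] _] := dg.
have cov : forall x y, e x y -> index x s < index y s -> index x s < l.
  move=> x y Exy H; move: (vc x y Exy); rewrite !in_take //.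
  by case/orP=> // H2; apply: ltn_trans H H2.
have [Xs [H1 H2 H3]] := @build k p s l D2 sg kp dg ls O2 cov l 0 D1 (add0n l) O1 (fun x y _ _ (H : _ < 0) => match notF H with end).
by exists Xs.
Qed.

End Proof.

Theorem mainTheorem16 :
  (forall (T : finType) (e : rel T) (k p : nat) (s : seq T) (l : nat),
     simple_graph e -> 1 <= k -> k.+1 <= p ->
     degenerate_ordering e k s ->
     1 <= l <= size s ->
     vertex_cover e (fun x => x \in take l s) ->
     inv_diam_le e p l)
  /\
  (forall (T : finType) (e : rel T) (k p : nat),
     simple_graph e -> 1 <= k -> k.+1 <= p ->
     k_degenerate e k ->
     inv_diam_le e p (#|T| - 1)).
Proof.
split.
  move=> T e k p s l sg _ kp dg /andP[_ ls]; exact: (@general T e k p s l sg kp dg ls).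
move=> T e k p sg _ kp [s dg].
have [[us alls] _] := dg.
have cT : #|T| = size s.
  rewrite -(card_uniqP us); apply: eq_card => x; by rewrite alls.
rewrite cT; apply: (@general T e k p s (size s - 1) sg kp dg); first exact: leq_subr.
move=> x y Exy; rewrite !in_take ?alls //.
have nxy : index x s != index y s.
  apply/negP=> /eqP Hxy.
  have xy : x = y by rewrite -(nth_index x (alls x)) Hxy nth_index.
  by subst y; rewrite sg.2 in Exy.
have hx := index_mem x s; have hy := index_mem y s; rewrite !alls in hx hy.
case: (ltngtP (index x s) (index y s)) nxy => // H _.
  by rewrite (leq_trans H) // -ltnS subn1 prednK // (leq_ltn_trans _ hx).
by rewrite orbC (leq_trans H) // -ltnS subn1 prednK // (leq_ltn_trans _ hx).
Qed.
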